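(* For $k\ge 3$ and $n\ge 2$, $$ZC_1(PC_{n,k})=n(32k+36)-66-6I_{\{k=3\}}-2I_{\{k=4\}},$$ $$ZC_2(PC_{n,k})=n(48k+59)-117+(2n-19)I_{\{k=3\}}+(n-5)I_{\{k=4\}}-I_{\{k=5\}}.$$
   Context: A polyomino chain is a sequence of unit squares in the plane in which consecutive squares share exactly one edge and the centers of consecutive squares form a path; it is regarded as the graph whose vertices are the corners of the squares and whose edges are the sides of the squares. A segment is a maximal straight subchain, including the kink and/or terminal squares at its ends (a kink being a square with two neighbouring squares and a vertex of degree 2); consecutive segments share one kink square and the length of a segment is its number of squares. $PC_{n,k}$ denotes the staircase-shaped polyomino chain built from $n$ units of $k$ squares each (so $nk$ squares in total): the first unit is a horizontal row of $k-1$ squares followed by one square attached below the last of them, and each subsequent unit is a horizontal row of $k-1$ squares attached to the right of the last square of the previous unit, followed by one square attached below the last of them. Equivalently, $PC_{n,k}$ has $2n$ segments with lengths $l_1=k-1$, $l_{2j}=2$ for $j=1,\dots,n$, and $l_{2j+1}=k$ for $j=1,\dots,n-1$. For a vertex $v$, $\tau_v$ is the number of vertices at distance exactly $2$ from $v$; $ZC_1(G)=\sum_{v\in V(G)}\tau_v^2$, $ZC_2(G)=\sum_{uv\in E(G)}\tau_u\tau_v$. $I_{\{A\}}$ is the indicator of condition $A$. *)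

(* Defs.v *)
From mathcomp Require Import all_boot all_order all_algebra.
Set Implicit Arguments. Unset Strict Implicit. Unset Printing Implicit Defensive.

(* A point of the integer lattice; the vertical axis points DOWNWARD
   (a reflection of the plane, which does not change the graph). *)
Definition point := (nat * nat)%type.

Definition corners (s : point) : seq point :=
  [:: (s.1, s.2); (s.1.+1, s.2); (s.1, s.2.+1); (s.1.+1, s.2.+1)].

Definition sides (s : point) : seq (point * point) :=
  [:: ((s.1, s.2), (s.1.+1, s.2)); ((s.1, s.2), (s.1, s.2.+1));
      ((s.1.+1, s.2), (s.1.+1, s.2.+1)); ((s.1, s.2.+1), (s.1.+1, s.2.+1))].

Definition pvertices (sq : seq point) : seq point := undup (flatten (map corners sq)).
Definition pedges (sq : seq point) : seq (point * point) := undup (flatten (map sides sq)).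
Definition padj (sq : seq point) (u v : point) : bool :=
  ((u, v) \in pedges sq) || ((v, u) \in pedges sq).

Fixpoint ball (sq : seq point) (v : point) (m : nat) : seq point :=
  match m with
  | 0 => [:: v]
  | m'.+1 => let b := ball sq v m' in
             [seq w <- pvertices sq | (w \in b) || has (fun u => padj sq u w) b]
  end.

Definition tau (sq : seq point) (v : point) : nat :=
  let b2 := ball sq v 2 in let b1 := ball sq v 1 in
  count (fun w => (w \in b2) && (w \notin b1)) (pvertices sq).

Definition ZC1 (sq : seq point) : nat := \sum_(v <- pvertices sq) tau sq v ^ 2.
Definition ZC2 (sq : seq point) : nat :=
  \sum_(e <- pedges sq) tau sq e.1 * tau sq e.2.

(* The staircase chain PC_{n,k}: unit j (0 <= j < n) consists of the horizontal
   row of k-1 squares (j(k-1)+i, j), i < k-1, followed by the square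
   ((j+1)(k-1)-1, j+1) attached below (here: with larger y) the last of them.
   The next unit's row starts at x = (j+1)(k-1), i.e. to the right of that square. *)
Definition PC (n k : nat) : seq point :=
  flatten [seq rcons [seq (j * (k - 1) + i, j) | i <- iota 0 (k - 1)]
                     ((j.+1) * (k - 1) - 1, j.+1) | j <- iota 0 n].

(* Main.v *)
Require Import Defs.
From mathcomp Require Import all_boot all_order all_algebra zify.
Set Implicit Arguments. Unset Strict Implicit. Unset Printing Implicit Defensive.


Definition hE (sq : seq point) (p : point) := (p, (p.1.+1, p.2)) \in pedges sq.
Definition vE (sq : seq point) (p : point) := (p, (p.1, p.2.+1)) \in pedges sq.

Lemma nS1 n : (n.+1 == n) = false. Proof. lia. Qed.
Lemma nS2 n : (n.+2 == n) = false. Proof. lia. Qed.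
Lemma nS3 n : (n.+3 == n) = false. Proof. lia. Qed.
Lemma nS4 n : (n.+4 == n) = false. Proof. lia. Qed.
Lemma Sn1 n : (n == n.+1) = false. Proof. lia. Qed.
Lemma Sn2 n : (n == n.+2) = false. Proof. lia. Qed.
Lemma Sn3 n : (n == n.+3) = false. Proof. lia. Qed.
Lemma Sn4 n : (n == n.+4) = false. Proof. lia. Qed.
Ltac eqdec := rewrite ?eqSS ?nS1 ?nS2 ?nS3 ?nS4 ?Sn1 ?Sn2 ?Sn3 ?Sn4 ?eqxx /=.

Section Generic.
Variable sq : seq point.


Lemma mem_pedges e : (e \in pedges sq) = has (fun s => e \in sides s) sq.
Proof.
rewrite /pedges mem_undup; apply/flatten_mapP/hasP => -[s h1 h2]; by exists s.
Qed.

Lemma mem_pvertices v : (v \in pvertices sq) = has (fun s => v \in corners s) sq.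
Proof.
rewrite /pvertices mem_undup; apply/flatten_mapP/hasP => -[s h1 h2]; by exists s.
Qed.

Lemma edge_shape u w : (u, w) \in pedges sq ->
  (w = (u.1.+1, u.2)) \/ (w = (u.1, u.2.+1)).
Proof.
rewrite mem_pedges => /hasP [s _]; rewrite /sides !inE.
by case/or4P => /eqP [-> ->]; [left|right|right|left].
Qed.

Lemma edge_mem u w : (u, w) \in pedges sq -> (u \in pvertices sq) && (w \in pvertices sq).
Proof.
rewrite mem_pedges !mem_pvertices => /hasP [s hs]; rewrite /sides !inE.
by case/or4P => /eqP [-> ->]; apply/andP; split; apply/hasP; exists s => //; rewrite /corners !inE eqxx ?orbT.
Qed.

Lemma edgeE u w : ((u, w) \in pedges sq) =
  ((w == (u.1.+1, u.2)) && hE sq u) || ((w == (u.1, u.2.+1)) && vE sq u).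
Proof.
apply/idP/idP => [h|].
  case: (edge_shape h) => e; rewrite /hE /vE -e h eqxx //= orbT //.
by case/orP => /andP [/eqP -> h].
Qed.

Lemma padjE u w : padj sq u w =
  [|| (w == (u.1.+1, u.2)) && hE sq u, (w == (u.1, u.2.+1)) && vE sq u,
      [&& 0 < u.1, w == (u.1.-1, u.2) & hE sq (u.1.-1, u.2)] |
      [&& 0 < u.2, w == (u.1, u.2.-1) & vE sq (u.1, u.2.-1)]].
Proof.
rewrite /padj !edgeE; case: u => a b; case: w => x y /=.
rewrite -!orbA; congr (_ || (_ || _)).
apply/idP/idP.
  case/orP => /andP [/eqP [-> ->] h]; apply/orP; [left|right]; by rewrite /= eqxx h.
case/orP => /and3P [ha /eqP [-> ->] h]; apply/orP; [left|right]; by rewrite prednK // eqxx h.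
Qed.

Lemma count_sum (T : Type) (P : pred T) (s : seq T) : count P s = \sum_(w <- s) (P w : nat).
Proof. by elim: s => [|w s IH]; rewrite ?big_nil // big_cons /= IH. Qed.

Lemma count_pts (s : seq point) (P : pred point) (cs : seq (point * bool)) : uniq s ->
  (forall w, (P w : nat) = \sum_(c <- cs) ((w == c.1) && c.2 : nat)) ->
  count P s = \sum_(c <- cs) ((c.1 \in s) && c.2 : nat).
Proof.
move=> us hP; rewrite count_sum (eq_bigr _ (fun w _ => hP w)) exchange_big /=.
apply: eq_bigr => c _; case: c.2; last by rewrite andbF big1 // => w _; rewrite andbF.
by rewrite (eq_bigr (fun w => (w == c.1) : nat)) => [|w _]; rewrite ?andbT // -count_sum count_uniq_mem.
Qed.

Definition tauF (a b : nat) : nat :=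
  (hE sq (a,b) && hE sq (a.+1,b))
+ (vE sq (a,b) && vE sq (a,b.+1))
+ ((hE sq (a,b) && vE sq (a.+1,b)) || (vE sq (a,b) && hE sq (a,b.+1)))
+ ((0<a) && ((hE sq (a.-1,b) && vE sq (a.-1,b)) || (vE sq (a,b) && hE sq (a.-1,b.+1))))
+ ((0<b) && ((hE sq (a,b) && vE sq (a.+1,b.-1)) || (vE sq (a,b.-1) && hE sq (a,b.-1))))
+ [&& 0<a, 0<b & ((hE sq (a.-1,b) && vE sq (a.-1,b.-1)) || (vE sq (a,b.-1) && hE sq (a.-1,b.-1)))]
+ [&& 1<a, hE sq (a.-1,b) & hE sq (a.-2,b)]
+ [&& 1<b, vE sq (a,b.-1) & vE sq (a,b.-2)].


Lemma count_cands (s cs : seq point) (P : pred point) : uniq s -> uniq cs ->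
  (forall w, P w -> w \in cs) ->
  count P s = \sum_(c <- cs) ((c \in s) && P c : nat).
Proof.
move=> us ucs hP; rewrite -count_sum.
rewrite (eq_count (a2 := predI P (mem cs))); last by move=> w /=; case: (boolP (P w)) => // /hP ->.
rewrite -!size_filter; apply: perm_size; apply: uniq_perm; rewrite ?filter_uniq //.
by move=> w; rewrite !mem_filter /=; case: (P w); case: (w \in s); case: (w \in cs).
Qed.

Definition cands (a b : nat) : seq point :=
  [:: (a.+2,b); (a,b.+2); (a.+1,b.+1)] ++ (if 0 < a then [:: (a.-1,b.+1)] else [::])
  ++ (if 0 < b then [:: (a.+1,b.-1)] else [::]) ++ (if (0 < a) && (0 < b) then [:: (a.-1,b.-1)] else [::])
  ++ (if 1 < a then [:: (a.-2,b)] else [::]) ++ (if 1 < b then [:: (a,b.-2)] else [::]).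


Lemma padj_mem u w : padj sq u w -> (u \in pvertices sq) && (w \in pvertices sq).
Proof. by rewrite /padj => /orP [/edge_mem //|/edge_mem /andP [-> ->]]. Qed.

Definition Pab a b w := [&& w != (a,b), ~~ padj sq (a,b) w &
     has (fun u => padj sq (a,b) u && padj sq u w) [:: (a.+1,b); (a.-1,b); (a,b.+1); (a,b.-1)]].

Lemma tau_count a b : tau sq (a,b) = count (Pab a b) (pvertices sq).
Proof.
set v := (a,b); rewrite /tau; apply: eq_in_count => w wv /=.
have m1 x : (x \in ball sq v 1) = ((x == v) || padj sq v x) && (x \in pvertices sq).
  by rewrite /= mem_filter inE orbF.
have m2 : (w \in ball sq v 2) = ((w \in ball sq v 1) || has (fun u => padj sq u w) (ball sq v 1)) && (w \in pvertices sq).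
  exact: mem_filter.
rewrite m2 m1 wv !andbT /Pab -/v.
case: (eqVneq w v) => [->|wnv] //=.
case: (boolP (padj sq v w)) => pvw //=.
rewrite -[RHS]/(has (fun u => padj sq v u && padj sq u w) [:: (a.+1,b); (a.-1,b); (a,b.+1); (a,b.-1)]).
rewrite andbT.
apply/hasP/hasP => [[u] | [u un /andP [h1 h2]]].
  rewrite mem_filter inE orbF => /andP [/orP [/eqP ->|h1] _] h2; first by rewrite h2 in pvw.
  exists u; last by rewrite h1.
  move: h1; rewrite padjE /v /= !inE.
  by case/or4P => [/andP[/eqP -> _]|/andP[/eqP -> _]|/and3P[_ /eqP -> _]|/and3P[_ /eqP -> _]]; rewrite eqxx ?orbT.
exists u => //; rewrite mem_filter inE h1 orbT /=.
by case/andP: (padj_mem h1).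
Qed.

Lemma Pab_memE a b c : (c \in pvertices sq) && Pab a b c = Pab a b c.
Proof.
case: (boolP (Pab a b c)) => [h|]; last by rewrite andbF.
move: (h) => /and3P [_ _ /hasP [u _ /andP [_ /padj_mem /andP [_ ->]]]] //.
Qed.

Lemma tau_cands a b : uniq (cands a b) -> (forall w, Pab a b w -> w \in cands a b) ->
  tau sq (a,b) = \sum_(c <- cands a b) (Pab a b c : nat).
Proof.
move=> h1 h2; rewrite tau_count (count_cands _ h1 h2) ?undup_uniq //.
by apply: eq_bigr => c _; rewrite Pab_memE.
Qed.

Lemma tauE a b : tau sq (a,b) = tauF a b.
Proof.
case: a => [|[|a]]; case: b => [|[|b]];
(rewrite tau_cands; [ | by rewrite /= ?inE ?xpair_eqE; eqdec |
  move=> w /and3P [hwv _] /hasP [u hu /andP [h1 h]];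
  move: hu; rewrite !inE => /or4P [] /eqP ?; subst u;
  move: h; rewrite padjE => /or4P [/andP[/eqP ? _]|/andP[/eqP ? _]|/and3P[g /eqP ? _]|/and3P[g /eqP ? _]]; subst w; (try move: g);
  move: hwv h1; rewrite ?padjE /= ?inE ?xpair_eqE; eqdec; try done ]).
all: rewrite /cands /= ?big_cons ?big_nil /tauF /Pab /= ?padjE /= ?xpair_eqE; eqdec.
all: rewrite ?(orbF, andbF, orFb, andFb, andbT, andTb) ?addn0 ?add0n ?addnA //.
Qed.

Lemma hEE x y : hE sq (x,y) = ((x,y) \in sq) || (0 < y) && ((x,y.-1) \in sq).
Proof.
rewrite /hE mem_pedges; apply/hasP/idP => [[[s1 s2] hs]|].
  by rewrite /sides !inE /= => /or4P [] /eqP [] *; subst; rewrite ?hs ?orbT //; lia.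
case/orP => [h|/andP [hy h]]; [exists (x,y) | exists (x,y.-1)] => //;
  by rewrite /sides !inE ?prednK // eqxx ?orbT.
Qed.

Lemma vEE x y : vE sq (x,y) = ((x,y) \in sq) || (0 < x) && ((x.-1,y) \in sq).
Proof.
rewrite /vE mem_pedges; apply/hasP/idP => [[[s1 s2] hs]|].
  by rewrite /sides !inE /= => /or4P [] /eqP [] *; subst; rewrite ?hs ?orbT //; lia.
case/orP => [h|/andP [hy h]]; [exists (x,y) | exists (x.-1,y)] => //;
  by rewrite /sides !inE ?prednK // eqxx ?orbT.
Qed.

Lemma vertE x y : ((x,y) \in pvertices sq) = [|| (x,y) \in sq, (0 < x) && ((x.-1,y) \in sq),
   (0 < y) && ((x,y.-1) \in sq) | [&& 0 < x, 0 < y & (x.-1,y.-1) \in sq]].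
Proof.
rewrite mem_pvertices; apply/hasP/idP => [[[s1 s2] hs]|].
  by rewrite /corners !inE /= => /or4P [] /eqP [] *; subst; rewrite ?hs ?orbT.
case/or4P => [h|/andP [hx h]|/andP [hy h]|/and3P [hx hy h]];
  [exists (x,y) | exists (x.-1,y) | exists (x,y.-1) | exists (x.-1,y.-1)] => //;
  by rewrite /corners !inE /= ?prednK // eqxx ?orbT.
Qed.
End Generic.


Definition Sq n m x y := (y <= n) && (y * m <= x.+1) && (x.+1 <= (if y < n then y * m + m else y * m)).
Definition Hc n m x y := (y <= n.+1) && (y * m - m - 1 <= x) &&
  (x < (if y < n then y * m + m else if y == n then y * m else y * m - m)).
Definition Vc n m x y := (y <= n) && (y * m - 1 <= x) && (x <= (if y < n then y * m + m else y * m)).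
Definition Vx n m x y := (y <= n.+1) && (y * m - m - 1 <= x) &&
  (x <= (if y < n then y * m + m else if y == n then y * m else y * m - m)).

Lemma memPC n m x y : 0 < m -> ((x,y) \in PC n m.+1) = Sq n m x y.
Proof.
move=> m0; rewrite /PC subn1 /=.
apply/flatten_mapP/idP.
- case=> j; rewrite mem_iota add0n => /andP [_ hj]; rewrite mem_rcons inE.
  case/orP => [/eqP [-> ->]|/mapP [i]]; rewrite /Sq.
  + rewrite mulSn; case: ifP => _; lia.
  + rewrite mem_iota add0n => /andP [_ hi] [-> ->]; rewrite hj; lia.
- rewrite /Sq => /andP [/andP [hy h1] h2].
  case: (eqVneq x.+1 (y * m)) => hx.
  + case: y hy h1 h2 hx => [|j] hy h1 h2 hx; first by rewrite mul0n in hx.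
    exists j; first by rewrite mem_iota; lia.
    by rewrite mem_rcons inE -hx subn1 /= eqxx.
  + have hyn : y < n by move: h2; case: ifP => // _; lia.
    exists y; first by rewrite mem_iota.
    rewrite mem_rcons inE; apply/orP; right; apply/mapP; exists (x - y * m).
      rewrite mem_iota; rewrite hyn in h2; lia.
    congr (_,_); lia.
Qed.

Ltac dec_if := match goal with |- context [if ?c then _ else _] => let H := fresh "H" in case: (boolP c) => H end.
Ltac ifs_lia := repeat dec_if; rewrite ?orbF ?andbT; try done; try (exfalso; lia); apply/idP/idP => HH; lia.

Lemma hE_PC n m (m0 : 0 < m) (n0 : 0 < n) x y : hE (PC n m.+1) (x,y) = Hc n m x y.
Proof.
rewrite hEE !memPC //; case: y => [|y] /=; rewrite /Sq /Hc ?mulSn ?mul0n.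
 all: ifs_lia.
Qed.

Lemma vE_PC n m (m0 : 0 < m) (n0 : 0 < n) x y : vE (PC n m.+1) (x,y) = Vc n m x y.
Proof.
rewrite vEE !memPC //; case: y => [|y] /=; rewrite /Sq /Vc ?mulSn ?mul0n; ifs_lia.
Qed.

Lemma vert_PC n m (m0 : 0 < m) (n0 : 0 < n) x y : ((x,y) \in pvertices (PC n m.+1)) = Vx n m x y.
Proof.
rewrite vertE !memPC //; case: y => [|[|y]] /=; rewrite /Sq /Vx ?mulSn ?mul0n; ifs_lia.
Qed.

Import GRing.Theory Num.Theory.
Local Open Scope ring_scope.

Definition spec (n m y : nat) : seq (int * nat) :=
  let P := (y * m)%N in
  if y == 0%N then [:: (-2, 0%N); (-1, 1%N)]
  else if (y < n)%N then
     (if y == 1%N then [:: (-2, 0%N); (-1, 1%N)] else [::]) ++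
     [:: (1, (P - 2)%N); (1, (P - 1)%N); (1, P); (1, P.+1)] ++
     (if y == n.-1 then [:: (-1, (P + m)%N)] else [::])
  else if y == n then [:: (1, (P - 2)%N); (-1, P)]
  else if y == n.+1 then [:: (-1, (P - m - 1)%N); (-2, (P - m)%N)]
  else [::].

Definition T (n m x y : nat) : int := 4 + \sum_(u <- spec n m y) u.1 * ((x == u.2) : nat)%:Z.

Ltac dec_eq x y :=
  first [ have ->: (x == y) = true by apply/eqP; lia
        | have ->: (x == y) = false by apply/eqP; lia
        | let H := fresh "H" in case: (eqVneq x y) => H ].
Ltac dec_le x y :=
  first [ have ->: (x <= y)%N = true by lia
        | have ->: (x <= y)%N = false by apply/negbTE; rewrite -ltnNge; lia
        | let H := fresh "H" in case: (leqP x y) => H ].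
Ltac dec_b c :=
  first [ have ->: c = true by lia
        | have ->: c = false by apply/negbTE/negP; lia
        | let H := fresh "H" in case: (boolP c) => H ].
Ltac crush_if := repeat match goal with |- context [if ?c then _ else _] => dec_b c end.
Ltac crush_at :=
  repeat match goal with
  | |- context [?x == ?y :> nat] => dec_eq x y
  | |- context [(?x <= ?y)%N] => dec_le x y
  end.

Lemma tau_PC n m x y : (2 <= m)%N -> (2 <= n)%N -> Vx n m x y -> (tau (PC n m.+1) (x,y))%:Z = T n m x y.
Proof.
move=> m2 n2; have m0 : (0 < m)%N by lia.
have n0 : (0 < n)%N by lia.
rewrite tauE /tauF !(hE_PC m0 n0) !(vE_PC m0 n0) /T /spec /Hc /Vc /Vx.
case: y => [|[|y]] /=.
all: rewrite ?mul0n ?mul1n ?mulSn.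
all: crush_if; move=> hv; rewrite ?big_cons ?big_nil /=.
all: crush_at.
all: lia.
Qed.



Definition c1 (lo len e p : nat) : nat := [&& (e <= p)%N, (lo <= p - e)%N & (p - e < lo + len)%N].
Definition c2 (lo len e1 p e2 q : nat) : nat :=
  [&& (e1 <= p)%N, (lo <= p - e1)%N, (p - e1 < lo + len)%N & (p - e1 + e2 == q)%N].

Lemma sumZ (I : Type) (s : seq I) (f : I -> nat) : \sum_(x <- s) (f x)%:Z = (\sum_(x <- s) f x)%N%:Z.
Proof. by elim: s => [|a s IH]; rewrite ?big_nil // !big_cons IH PoszD. Qed.

Lemma sum_ind lo len e p : \sum_(x <- iota lo len) ((x + e == p)%N : nat)%:Z = (c1 lo len e p)%:Z.
Proof.
rewrite sumZ -count_sum /c1; congr Posz.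
case: (leqP e p) => hep /=.
  rewrite (eq_count (a2 := pred1 (p - e)%N)); last by move=> x /=; apply/eqP/eqP; lia.
  by rewrite count_uniq_mem ?iota_uniq // mem_iota.
by rewrite (eq_count (a2 := pred0)) ?count_pred0 // => x /=; apply/eqP; lia.
Qed.

Lemma sum_ind2 lo len e1 p e2 q :
  \sum_(x <- iota lo len) ((x + e1 == p)%N : nat)%:Z * ((x + e2 == q)%N : nat)%:Z = (c2 lo len e1 p e2 q)%:Z.
Proof.
transitivity (\sum_(x <- iota lo len) ((x + e1 == p)%N : nat)%:Z * ((p - e1 + e2 == q)%N : nat)%:Z).
  by apply: eq_bigr => x _; case: (eqVneq (x + e1)%N p) => h; rewrite ?mul0r //; congr (_ * Posz (nat_of_bool _)); apply/eqP/eqP; lia.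
rewrite -mulr_suml sum_ind /c1 /c2 -PoszM; congr Posz.
by case: (e1 <= p)%N; case: (lo <= p - e1)%N; case: (p - e1 < lo + len)%N; case: (p - e1 + e2 == q)%N.
Qed.

Lemma expand4 (a b : int) : (4 + a) * (4 + b) = Posz 16 + 4 * a + 4 * b + a * b.
Proof. lia. Qed.

Lemma rowG (lo len : nat) (s1 s2 : seq (int * nat)) (e1 e2 : nat) :
  \sum_(x <- iota lo len) ((4 + \sum_(u <- s1) u.1 * ((x + e1 == u.2)%N : nat)%:Z) *
                           (4 + \sum_(w <- s2) w.1 * ((x + e2 == w.2)%N : nat)%:Z))
  = 16 * len%:Z + 4 * \sum_(u <- s1) u.1 * (c1 lo len e1 u.2)%:Z
    + 4 * \sum_(w <- s2) w.1 * (c1 lo len e2 w.2)%:Z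
    + \sum_(u <- s1) \sum_(w <- s2) u.1 * w.1 * (c2 lo len e1 u.2 e2 w.2)%:Z.
Proof.
under eq_bigr => x _ do rewrite expand4.
rewrite !big_split /=.
have -> : \sum_(x <- iota lo len) (Posz 16) = 16 * len%:Z.
  elim: len lo => [|len IH] lo; first by rewrite big_nil mulr0.
  by rewrite /= big_cons IH; lia.
congr (_ + _ + _ + _).
- rewrite -mulr_sumr exchange_big /=; congr (_ * _); apply: eq_bigr => w _.
  by rewrite -mulr_sumr sum_ind.
- rewrite -mulr_sumr exchange_big /=; congr (_ * _); apply: eq_bigr => u _.
  by rewrite -mulr_sumr sum_ind.
- under eq_bigr => x _ do rewrite mulr_suml.
  rewrite exchange_big /=; apply: eq_bigr => u _.
  under eq_bigr => x _ do rewrite mulr_sumr.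
  rewrite exchange_big /=; apply: eq_bigr => w _.
  rewrite -sum_ind2 mulr_sumr; apply: eq_bigr => x _.
  by rewrite mulrACA.
Qed.

Close Scope ring_scope.

Definition loV (m y : nat) := y * m - m - 1.
Definition hiV (n m y : nat) := if y < n then y * m + m else if y == n then y * m else y * m - m.
Definition hiT (n m y : nat) := if y < n then y * m + m else y * m.

Definition Vl n m : seq point :=
  [seq (x, y) | y <- iota 0 n.+2, x <- iota (loV m y) ((hiV n m y).+1 - loV m y)].
Definition Elh n m : seq (point * point) :=
  [seq ((x, y), (x.+1, y)) | y <- iota 0 n.+2, x <- iota (loV m y) (hiV n m y - loV m y)].
Definition Elv n m : seq (point * point) :=
  [seq ((x, y), (x, y.+1)) | y <- iota 0 n.+1, x <- iota (y * m - 1) ((hiT n m y).+1 - (y * m - 1))].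

Lemma uniq_rows (T : eqType) (f : nat -> nat -> T) (s : seq nat) (t : nat -> seq nat) :
  (forall x y x' y', f x y = f x' y' -> y = y') -> (forall y x x', f x y = f x' y -> x = x') ->
  uniq s -> (forall y, uniq (t y)) -> uniq [seq f x y | y <- s, x <- t y].
Proof.
move=> fy fx; elim: s => //= y s IH /andP [ys us] ut.
rewrite cat_uniq map_inj_uniq ?ut //; last by move=> a b /fx.
rewrite IH // andbT; apply/hasPn => z /allpairsPdep [y' [x' [hy' _ ->]]].
by apply/mapP => -[x'' _ /fy e]; move: hy'; rewrite e (negbTE ys).
Qed.

Lemma mem_Vl n m x y : ((x, y) \in Vl n m) = Vx n m x y.
Proof.
rewrite /Vx -/(loV m y) -/(hiV n m y); apply/allpairsPdep/idP.
  move=> [y' [x' [hy hx [-> ->]]]]; move: hy hx; rewrite !mem_iota; set h := hiV n m y'; lia.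
move=> h; exists y, x; split => //; rewrite mem_iota; move: h; set h := hiV n m y; lia.
Qed.

Lemma mem_Elh n m u w : ((u, w) \in Elh n m) = (w == (u.1.+1, u.2)) && Hc n m u.1 u.2.
Proof.
case: u => x y /=; rewrite /Hc -/(loV m y) -/(hiV n m y); apply/allpairsPdep/idP.
  move=> [y' [x' [hy hx [-> -> ->]]]]; move: hy hx; rewrite !mem_iota eqxx /=; set h := hiV n m y'; lia.
move=> /andP [/eqP -> h]; exists y, x; split => //; rewrite mem_iota; move: h; set h := hiV n m y; lia.
Qed.

Lemma mem_Elv n m u w : ((u, w) \in Elv n m) = (w == (u.1, u.2.+1)) && Vc n m u.1 u.2.
Proof.
case: u => x y /=; rewrite /Vc -/(hiT n m y); apply/allpairsPdep/idP.
  move=> [y' [x' [hy hx [-> -> ->]]]]; move: hy hx; rewrite !mem_iota eqxx /=; set h := hiT n m y'; lia.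
move=> /andP [/eqP -> h]; exists y, x; split => //; rewrite mem_iota; move: h; set h := hiT n m y; lia.
Qed.

Lemma perm_V n m : (0 < m) -> (0 < n) -> perm_eq (pvertices (PC n m.+1)) (Vl n m).
Proof.
move=> m0 n0; apply: uniq_perm; first exact: undup_uniq.
  apply: uniq_rows; [by move=> x y x' y' [] | by move=> y x x' [] | exact: iota_uniq | move=> y; exact: iota_uniq].
by case=> x y; rewrite mem_Vl vert_PC.
Qed.

Lemma perm_E n m : (0 < m) -> (0 < n) -> perm_eq (pedges (PC n m.+1)) (Elh n m ++ Elv n m).
Proof.
move=> m0 n0; apply: uniq_perm; first exact: undup_uniq.
  rewrite cat_uniq; apply/and3P; split.
  - apply: uniq_rows; [by move=> x y x' y' [] | by move=> y x x' [] | exact: iota_uniq | move=> y; exact: iota_uniq].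
  - apply/hasPn => -[u w]; rewrite mem_Elv => /andP [/eqP -> _]; rewrite mem_Elh /=.
    by rewrite xpair_eqE; apply/negP => /andP [/andP [/eqP h _] _]; lia.
  - apply: uniq_rows; [by move=> x y x' y' [] | by move=> y x x' [] | exact: iota_uniq | move=> y; exact: iota_uniq].
case=> u w; rewrite mem_cat mem_Elh mem_Elv edgeE; case: u => x y /=.
by rewrite (hE_PC m0 n0) (vE_PC m0 n0).
Qed.

Import GRing.Theory Num.Theory.
Local Open Scope ring_scope.

Definition rowF (lo len e1 e2 : nat) (s1 s2 : seq (int * nat)) : int :=
  16 * len%:Z + 4 * \sum_(u <- s1) u.1 * (c1 lo len e1 u.2)%:Z
    + 4 * \sum_(w <- s2) w.1 * (c1 lo len e2 w.2)%:Z
    + \sum_(u <- s1) \sum_(w <- s2) u.1 * w.1 * (c2 lo len e1 u.2 e2 w.2)%:Z.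

Lemma rowG0 lo len s1 s2 :
  \sum_(x <- iota lo len) ((4 + \sum_(u <- s1) u.1 * ((x == u.2) : nat)%:Z) *
                           (4 + \sum_(w <- s2) w.1 * ((x == w.2) : nat)%:Z)) = rowF lo len 0 0 s1 s2.
Proof. by rewrite /rowF -rowG; apply: eq_bigr => x _; rewrite addn0. Qed.

Lemma rowG1 lo len s1 s2 :
  \sum_(x <- iota lo len) ((4 + \sum_(u <- s1) u.1 * ((x == u.2) : nat)%:Z) *
                           (4 + \sum_(w <- s2) w.1 * ((x.+1 == w.2) : nat)%:Z)) = rowF lo len 0 1 s1 s2.
Proof. by rewrite /rowF -rowG; apply: eq_bigr => x _; rewrite addn0 addn1. Qed.

Definition rowV n m y := rowF (loV m y) ((hiV n m y).+1 - loV m y) 0 0 (spec n m y) (spec n m y).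
Definition rowH n m y := rowF (loV m y) (hiV n m y - loV m y) 0 1 (spec n m y) (spec n m y).
Definition rowT n m y := rowF (y * m - 1) ((hiT n m y).+1 - (y * m - 1)) 0 0 (spec n m y) (spec n m y.+1).

Lemma ZC1_rows n m : (2 <= m)%N -> (2 <= n)%N ->
  (ZC1 (PC n m.+1))%:Z = \sum_(y <- iota 0 n.+2) rowV n m y.
Proof.
move=> m2 n2; have m0 : (0 < m)%N by lia.
have n0 : (0 < n)%N by lia.
rewrite /ZC1 -sumZ (perm_big _ (perm_V m0 n0)) /=.
rewrite (eq_big_seq (fun v => T n m v.1 v.2 * T n m v.1 v.2)); last first.
  by case=> x y; rewrite mem_Vl => hv /=; rewrite PoszM (tau_PC m2 n2 hv).
rewrite big_allpairs_dep /=; apply: eq_bigr => y _.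
by rewrite /T rowG0.
Qed.

Lemma ZC2_rows n m : (2 <= m)%N -> (2 <= n)%N ->
  (ZC2 (PC n m.+1))%:Z = \sum_(y <- iota 0 n.+2) rowH n m y + \sum_(y <- iota 0 n.+1) rowT n m y.
Proof.
move=> m2 n2; have m0 : (0 < m)%N by lia.
have n0 : (0 < n)%N by lia.
rewrite /ZC2 -sumZ (perm_big _ (perm_E m0 n0)) /=.
rewrite (eq_big_seq (fun e => T n m e.1.1 e.1.2 * T n m e.2.1 e.2.2)); last first.
  case=> [[x y] [x' y']] /= he; move: (he); rewrite -(perm_mem (perm_E m0 n0)) => /edge_mem /andP [].
  by rewrite !(vert_PC m0 n0) => h1 h2; rewrite PoszM (tau_PC m2 n2 h1) (tau_PC m2 n2 h2).
rewrite big_cat !big_allpairs_dep /=; congr (_ + _); apply: eq_bigr => y _.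
  by rewrite /T rowG1.
by rewrite /T rowG0.
Qed.


Ltac rowtac := rewrite /rowV /rowH /rowT /rowF /spec /loV /hiV /hiT ?mulSn ?mul0n ?mul1n;
  crush_if; rewrite ?big_cons ?big_nil /= /c1 /c2; crush_at; lia.

Lemma V0 n m : (2 <= m)%N -> (2 <= n)%N -> rowV n m 0 = 16 * m%:Z - 3.
Proof. move=> *. rowtac. Qed.
Lemma V1 n m : (2 <= m)%N -> rowV n.+3 m 1 = 32 * m%:Z + 33 - 6 * (m == 2)%:Z - 2 * (m == 3)%:Z.
Proof. move=> *. rowtac. Qed.
Lemma Vmid y d m : (2 <= m)%N -> rowV (y.+4 + d) m y.+2 = 32 * m%:Z + 68.
Proof. move=> *. rowtac. Qed.
Lemma Vnm1 n m : (2 <= m)%N -> rowV n.+3 m n.+2 = 32 * m%:Z + 61.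
Proof. move=> *. rowtac. Qed.
Lemma Vn n m : (2 <= m)%N -> rowV n.+2 m n.+2 = 16 * m%:Z + 34.
Proof. move=> *. rowtac. Qed.
Lemma Vn1 n m : (2 <= m)%N -> rowV n.+2 m n.+3 = 13.
Proof. move=> *. rowtac. Qed.
Lemma V21 m : (2 <= m)%N -> rowV 2 m 1 = 32 * m%:Z + 26 - 6 * (m == 2)%:Z - 2 * (m == 3)%:Z.
Proof. move=> *. rowtac. Qed.

Lemma H0 n m : (2 <= m)%N -> (2 <= n)%N -> rowH n m 0 = 16 * m%:Z - 14.
Proof. move=> *. rowtac. Qed.
Lemma H1 n m : (2 <= m)%N -> rowH n.+3 m 1 = 32 * m%:Z + 21 - 8 * (m == 2)%:Z - 3 * (m == 3)%:Z - (m == 4)%:Z.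
Proof. move=> *. rowtac. Qed.
Lemma Hmid y d m : (2 <= m)%N -> rowH (y.+4 + d) m y.+2 = 32 * m%:Z + 51.
Proof. move=> *. rowtac. Qed.
Lemma Hnm1 n m : (2 <= m)%N -> rowH n.+3 m n.+2 = 32 * m%:Z + 47 - (m == 2)%:Z.
Proof. move=> *. rowtac. Qed.
Lemma Hn n m : (2 <= m)%N -> rowH n.+2 m n.+2 = 16 * m%:Z + 20.
Proof. move=> *. rowtac. Qed.
Lemma Hn1 n m : (2 <= m)%N -> rowH n.+2 m n.+3 = 6.
Proof. move=> *. rowtac. Qed.
Lemma H21 m : (2 <= m)%N -> rowH 2 m 1 = 32 * m%:Z + 17 - 9 * (m == 2)%:Z - 3 * (m == 3)%:Z - (m == 4)%:Z.
Proof. move=> *. rowtac. Qed.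

Lemma T0 n m : (2 <= m)%N -> (2 <= n)%N -> rowT n m 0 = 16 * m%:Z + 9 - 3 * (m == 2)%:Z - (m == 3)%:Z.
Proof. move=> *. rowtac. Qed.
Lemma T1 n m : (2 <= m)%N -> rowT n.+3 m 1 = 16 * m%:Z + 56 - 2 * (m == 2)%:Z + (m == 3)%:Z.
Proof. move=> *. rowtac. Qed.
Lemma Tmid y d m : (2 <= m)%N -> rowT (y.+4 + d) m y.+2 = 16 * m%:Z + 56 + 2 * (m == 2)%:Z + (m == 3)%:Z.
Proof. move=> *. rowtac. Qed.
Lemma Tnm1 n m : (2 <= m)%N -> rowT n.+3 m n.+2 = 16 * m%:Z + 41 + (m == 2)%:Z + (m == 3)%:Z.
Proof. move=> *. rowtac. Qed.
Lemma Tn n m : (2 <= m)%N -> rowT n.+2 m n.+2 = 18.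
Proof. move=> *. rowtac. Qed.
Lemma T21 m : (2 <= m)%N -> rowT 2 m 1 = 16 * m%:Z + 41 - 3 * (m == 2)%:Z + (m == 3)%:Z.
Proof. move=> *. rowtac. Qed.


Lemma shift_mid n y : (2 <= y)%N -> (y.+2 <= n)%N -> exists y' d, y = y'.+2 /\ n = (y'.+4 + d)%N.
Proof. move=> hy hyn; exists y.-2, (n - y.+2)%N; split; lia. Qed.

Lemma sum_mid (f : nat -> int) n' C : (forall y, (2 <= y)%N -> (y.+2 <= n'.+3)%N -> f y = C) ->
  \sum_(y <- iota 2 n') f y = n'%:Z * C.
Proof.
move=> hf; rewrite (eq_big_seq (fun _ => C)); last by move=> y; rewrite mem_iota => hy; apply: hf; lia.
elim: n' {hf} 2%N => [|n' IH] a; first by rewrite big_nil mul0r.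
by rewrite /= big_cons IH; lia.
Qed.

Theorem corollary3 (n k : nat) (hk : (3 <= k)%N) (hn : (2 <= n)%N) :
  (ZC1 (PC n k))%:Z =
    (n * (32 * k + 36))%:Z - 66 - 6 * (k == 3%N)%:Z - 2 * (k == 4%N)%:Z
  /\
  (ZC2 (PC n k))%:Z =
    (n * (48 * k + 59))%:Z - 117 + (2 * n%:Z - 19) * (k == 3%N)%:Z
      + (n%:Z - 5) * (k == 4%N)%:Z - (k == 5%N)%:Z.
Proof.
case: k hk => [|m] hk //; have m2 : (2 <= m)%N by lia.
rewrite (ZC1_rows m2 hn) (ZC2_rows m2 hn).
case: n hn => [|[|[|n']]] hn //.
- rewrite /= !big_cons !big_nil.
  rewrite (V0 m2 hn) (V21 m2) (Vn 0 m2) (Vn1 0 m2).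
  rewrite (H0 m2 hn) (H21 m2) (Hn 0 m2) (Hn1 0 m2).
  rewrite (T0 m2 hn) (T21 m2) (Tn 0 m2).
  split; lia.
- have -> : (n'.+3).+2 = (2 + n' + 3)%N by lia.
  have -> : (n'.+3).+1 = (2 + n' + 2)%N by lia.
  rewrite !iotaD !big_cat /= !big_cons !big_nil.
  have hV : \sum_(y <- iota 2 n') rowV n'.+3 m y = n'%:Z * (32 * m%:Z + 68).
    apply: sum_mid => y hy hyn; have [y' [d [-> ->]]] := shift_mid hy hyn; exact: Vmid.
  have hH : \sum_(y <- iota 2 n') rowH n'.+3 m y = n'%:Z * (32 * m%:Z + 51).
    apply: sum_mid => y hy hyn; have [y' [d [-> ->]]] := shift_mid hy hyn; exact: Hmid.
  have hT : \sum_(y <- iota 2 n') rowT n'.+3 m y = n'%:Z * (16 * m%:Z + 56 + 2 * (m == 2)%:Z + (m == 3)%:Z).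
    apply: sum_mid => y hy hyn; have [y' [d [-> ->]]] := shift_mid hy hyn; exact: Tmid.
  rewrite hV hH hT.
  rewrite (V0 m2 hn) (V1 n' m2) (Vnm1 n' m2) (Vn n'.+1 m2) (Vn1 n'.+1 m2).
  rewrite (H0 m2 hn) (H1 n' m2) (Hnm1 n' m2) (Hn n'.+1 m2) (Hn1 n'.+1 m2).
  rewrite (T0 m2 hn) (T1 n' m2) (Tnm1 n' m2) (Tn n'.+1 m2).
  split; lia.
Qed.
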